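(* (i) For $g\ge1$, $H_0(\mathsf{Sp}(2g,2),Y)=0$ and $H_0(\mathsf{Sp}(2g,2),U)=0$. (ii) For $g\ge2$, $H_0(\mathsf{Sp}(2g,2),Z)=0$ and $H_0(\mathsf{Sp}(2g,2),\mathfrak{sp}(2g,2))=0$.
   Context: $\mathsf{Sp}(2g,2)$ is the symplectic group over $\mathbb F_2$ for the form $J=\begin{pmatrix}0&I\\-I&0\end{pmatrix}$, $U=\mathbb F_2^{2g}$ its natural module. $\mathfrak{sp}(2g,2)$ is the $\mathbb F_2$-space of matrices $\begin{pmatrix}\mathrm a&\mathrm b\\\mathrm c&\mathrm a^t\end{pmatrix}$ over $\mathbb F_2$ with $\mathrm b,\mathrm c$ symmetric $g\times g$, with $\mathsf{Sp}(2g,2)$ acting by conjugation. $Y\subseteq\mathfrak{sp}(2g,2)$ is the submodule of such matrices with $\mathsf{Diag}(\mathrm b)=\mathsf{Diag}(\mathrm c)=0$ and $\mathsf{Tr}(\mathrm a)=0$, and $Z=\mathfrak{sp}(2g,2)/Y$ (of dimension $2g+1$). $H_0(G,M)$ denotes the coinvariants $M/\langle gm-m\rangle$. *)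

(* Defs.v *)
From HB Require Import structures.
From mathcomp Require Import all_boot all_order all_algebra all_fingroup.
Set Implicit Arguments. Unset Strict Implicit. Unset Printing Implicit Defensive.
Import GRing.Theory.
Local Open Scope ring_scope.

(* All matrices are over F_2; 2g x 2g matrices have type 'M['F_2]_(g + g),
   so that they split into g x g blocks (ulsubmx, ursubmx, dlsubmx, drsubmx). *)

Definition Jform (g : nat) : 'M['F_2]_(g + g) :=
  block_mx 0 1%:M (- 1%:M) 0.

Definition inSp (g : nat) (A : 'M['F_2]_(g + g)) : bool :=
  A^T *m Jform g *m A == Jform g.

Definition symmetricb (g : nat) (b : 'M['F_2]_g) : bool := b^T == b.

Definition in_sp (g : nat) (X : 'M['F_2]_(g + g)) : bool :=
  [&& drsubmx X == (ulsubmx X)^T, symmetricb (ursubmx X)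
    & symmetricb (dlsubmx X)].

Definition diag_zero (g : nat) (b : 'M['F_2]_g) : bool :=
  [forall i, b i i == 0].

Definition in_Y (g : nat) (X : 'M['F_2]_(g + g)) : bool :=
  [&& in_sp X, diag_zero (ursubmx X), diag_zero (dlsubmx X)
    & \tr (ulsubmx X) == 0].

Definition conj_act (g : nat) (A X : 'M['F_2]_(g + g)) : 'M['F_2]_(g + g) :=
  A *m X *m invmx A.

Definition nat_act (g : nat) (A : 'M['F_2]_(g + g)) (u : 'cV['F_2]_(g + g))
  : 'cV['F_2]_(g + g) := A *m u.

(* H_0(G, M) = 0 for a submodule M (given by a predicate) of an F-vector space
   V on which G (given by a predicate on GT) acts via act: every element of M
   is a linear combination of elements  act x m - m  with x in G, m in M. *)
Definition coinv_zero (F : pzRingType) (GT : Type) (V : lmodType F)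
  (G : GT -> bool) (act : GT -> V -> V) (M : V -> bool) : Prop :=
  forall v, M v ->
    exists s : seq (F * GT * V),
      all (fun p => G p.1.2 && M p.2) s /\
      v = \sum_(p <- s) p.1.1 *: (act p.1.2 p.2 - p.2).

(* H_0(G, M / N) = 0 for the quotient of a submodule M by a submodule N
   (written out on representatives): every element of M is, modulo N,
   a linear combination of elements  act x m - m  with x in G, m in M. *)
Definition coinv_quot_zero (F : pzRingType) (GT : Type) (V : lmodType F)
  (G : GT -> bool) (act : GT -> V -> V) (M N : V -> bool) : Prop :=
  forall v, M v ->
    exists s : seq (F * GT * V),
      all (fun p => G p.1.2 && M p.2) s /\
      N (v - \sum_(p <- s) p.1.1 *: (act p.1.2 p.2 - p.2)).

(* Main.v *)
Require Import Defs.
From HB Require Import structures.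
From mathcomp Require Import all_boot all_order all_algebra all_fingroup.
Set Implicit Arguments. Unset Strict Implicit. Unset Printing Implicit Defensive.
Import GRing.Theory.
Local Open Scope ring_scope.

Lemma F2_addxx (a : 'F_2) : a + a = 0.
Proof. by case: a => [[|[|//]]] ?; apply/val_inj. Qed.

Lemma F2_opp (a : 'F_2) : - a = a.
Proof. by case: a => [[|[|//]]] ?; apply/val_inj. Qed.

Lemma F2_cases (a : 'F_2) : a = 0 \/ a = 1.
Proof. by case: a => [[|[|//]]] ?; [left|right]; apply/val_inj. Qed.

Lemma mx_addxx m n (A : 'M['F_2]_(m, n)) : A + A = 0.
Proof. by apply/matrixP => i j; rewrite !mxE F2_addxx. Qed.

Lemma mx_opp m n (A : 'M['F_2]_(m, n)) : - A = A.
Proof. by apply/matrixP => i j; rewrite !mxE F2_opp. Qed.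

Lemma mx_subE m n (A B : 'M['F_2]_(m, n)) : A - B = A + B.
Proof. by rewrite mx_opp. Qed.

Lemma JE g : Jform g = block_mx 0 1%:M 1%:M 0.
Proof. by rewrite /Jform mx_opp. Qed.

Lemma Jsym g : (Jform g)^T = Jform g.
Proof. by rewrite JE tr_block_mx !trmx0 trmx1. Qed.

Lemma JJ g : Jform g *m Jform g = 1%:M.
Proof.
by rewrite JE mulmx_block !mul0mx !mulmx0 !mul1mx !addr0 !add0r scalar_mx_block.
Qed.

Lemma tr11 (A : 'M['F_2]_1) : A^T = A.
Proof. by apply/matrixP => i j; rewrite !mxE !ord1. Qed.

Lemma xJx g (x : 'cV['F_2]_(g + g)) : x^T *m Jform g *m x = 0.
Proof.
rewrite -[x]vsubmxK tr_col_mx JE mul_row_block !mulmx0 !mulmx1 !add0r !addr0.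
by rewrite mul_row_col -[(usubmx x)^T *m _]tr11 trmx_mul trmxK mx_addxx.
Qed.

Definition pr g (i : 'I_(g + g)) : 'I_(g + g) :=
  match split i with inl k => rshift g k | inr k => lshift g k end.

Lemma pr_l g (k : 'I_g) : pr (lshift g k) = rshift g k.
Proof. by rewrite /pr -[lshift g k]/(unsplit (inl k)) unsplitK. Qed.
Lemma pr_r g (k : 'I_g) : pr (rshift g k) = lshift g k.
Proof. by rewrite /pr -[rshift g k]/(unsplit (inr k)) unsplitK. Qed.
Lemma prK g : involutive (@pr g).
Proof. by move=> i; case: (split_ordP i) => k ->; rewrite ?pr_l ?pr_r ?pr_l. Qed.
Lemma pr_neq g (i : 'I_(g + g)) : (pr i == i) = false.
Proof. by case: (split_ordP i) => k ->; rewrite ?pr_l ?pr_r eq_shift. Qed.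
Lemma pr_eq g (i j : 'I_(g + g)) : (pr i == pr j) = (i == j).
Proof. exact/inj_eq/can_inj/prK. Qed.

Definition e g (a : 'I_(g + g)) : 'cV['F_2]_(g + g) := delta_mx a 0.

Lemma Je g a : Jform g *m e a = e (pr a).
Proof.
rewrite /e -colE JE; apply/matrixP => i j; rewrite [in LHS]mxE [in RHS]mxE ord1 eqxx andbT.
case: (split_ordP a) => k ->; case: (split_ordP i) => l ->;
  rewrite ?pr_l ?pr_r ?block_mxEul ?block_mxEur ?block_mxEdl ?block_mxEdr !mxE ?eq_shift //.
Qed.

Lemma eTe g (a b : 'I_(g + g)) : (e a)^T *m e b = (a == b)%:R%:M.
Proof.
rewrite /e trmx_delta mul_delta_mx_cond; apply/matrixP => i j.
by rewrite !ord1 mulmxnE !mxE eqxx mulr1n; case: (a == b).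
Qed.

Lemma eeT g (a b : 'I_(g + g)) : e a *m (e b)^T = delta_mx a b.
Proof. by rewrite /e trmx_delta mul_delta_mx. Qed.

Definition spB g (B : 'M['F_2]_(g + g)) := B^T *m Jform g *m B = Jform g.

Lemma invmx_eq n (A B : 'M['F_2]_n) : A *m B = 1%:M -> invmx A = B.
Proof.
move=> AB; have [uA _] := mulmx1_unit AB.
by rewrite -[invmx A]mulmx1 -AB mulmxA mulVmx // mul1mx.
Qed.

Lemma spB_JBJ g (B : 'M['F_2]_(g + g)) : spB B -> inSp (Jform g *m B *m Jform g).
Proof.
move=> hB; apply/eqP; rewrite !trmx_mul Jsym.
have e1 : forall (A : 'M['F_2]_(g+g)), A *m Jform g *m Jform g = A.
  by move=> A; rewrite -mulmxA JJ mulmx1.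
rewrite !mulmxA (e1 (Jform g *m B^T)).
transitivity (Jform g *m (B^T *m Jform g *m B) *m Jform g); first by rewrite !mulmxA.
by rewrite hB JJ mul1mx.
Qed.

Lemma conj_JBJ g (B S : 'M['F_2]_(g + g)) : spB B ->
  conj_act (Jform g *m B *m Jform g) (Jform g *m S) = Jform g *m (B *m S *m B^T).
Proof.
move=> hB; have h1 : B^T *m (Jform g *m B *m Jform g) = 1%:M.
  by rewrite !mulmxA hB JJ.
rewrite /conj_act (invmx_eq (mulmx1C h1)).
by rewrite -!mulmxA; congr (_ *m (_ *m _)); rewrite mulmxA JJ mul1mx.
Qed.

Definition tv g (w : 'cV['F_2]_(g + g)) : 'M['F_2]_(g + g) :=
  1%:M + Jform g *m w *m w^T.

Lemma tv_sp g (w : 'cV['F_2]_(g + g)) : spB (tv w).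
Proof.
rewrite /spB /tv.
have trD : forall (A C : 'M['F_2]_(g+g)), (A + C)^T = A^T + C^T.
  by move=> A C; apply/matrixP => i j; rewrite !mxE.
rewrite trD trmx1 !trmx_mul trmxK Jsym.
rewrite !mulmxDl !mulmxDr !mul1mx !mulmx1 !mulmxA.
have e1 : forall (A : 'M['F_2]_(g+g)), A *m Jform g *m Jform g = A.
  by move=> A; rewrite -mulmxA JJ mulmx1.
rewrite !e1 JJ mul1mx.
have -> : w *m w^T *m Jform g *m w *m w^T = 0.
  by rewrite -(mulmxA w) -(mulmxA w) xJx mulmx0 mul0mx.
by rewrite addr0 -addrA mx_addxx addr0.
Qed.

Definition gen (F : pzRingType) (GT : Type) (V : lmodType F)
  (G : GT -> bool) (act : GT -> V -> V) (M : V -> bool) (v : V) : Prop :=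
    exists s : seq (F * GT * V),
      all (fun p => G p.1.2 && M p.2) s /\
      v = \sum_(p <- s) p.1.1 *: (act p.1.2 p.2 - p.2).

Section Gen.
Variables (F : pzRingType) (GT : Type) (V : lmodType F)
  (G : GT -> bool) (act : GT -> V -> V) (M : V -> bool).

Lemma gn0 : gen G act M 0.
Proof. by exists [::]; rewrite big_nil. Qed.

Lemma gnD x y : gen G act M x -> gen G act M y -> gen G act M (x + y).
Proof.
move=> [s [hs ->]] [t [ht ->]]; exists (s ++ t).
by rewrite all_cat hs ht big_cat.
Qed.

Lemma gnZ c x : gen G act M x -> gen G act M (c *: x).
Proof.
move=> [s [hs ->]]; exists [seq (c * p.1.1, p.1.2, p.2) | p <- s]; split.
  by rewrite all_map; apply: sub_all hs => p.
rewrite big_map scaler_sumr; apply: eq_bigr => p _ /=; by rewrite scalerA.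
Qed.

Lemma gen_diff x m : G x -> M m -> gen G act M (act x m - m).
Proof.
move=> hx hm; exists [:: (1, x, m)]; split; first by rewrite /= hx hm.
by rewrite big_seq1 scale1r.
Qed.

Lemma gen_sum (I : finType) (c : I -> F) (X : I -> V) :
  (forall i, c i != 0 -> gen G act M (X i)) -> gen G act M (\sum_i c i *: X i).
Proof.
move=> h; apply: (big_ind (gen G act M)); [exact: gn0 | exact: gnD |].
move=> i _; have [->|nz] := eqVneq (c i) 0; first by rewrite scale0r; exact: gn0.
exact/gnZ/h.
Qed.

Lemma gen_mono (M' : V -> bool) v : (forall m, M m -> M' m) ->
  gen G act M v -> gen G act M' v.
Proof.
move=> hM [s [hs ->]]; exists s; split => //.
by apply: sub_all hs => p /andP[-> /hM].
Qed.

End Gen.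

Lemma coinvE (F : pzRingType) (GT : Type) (V : lmodType F)
  (G : GT -> bool) (act : GT -> V -> V) (M : V -> bool) :
  (forall v, M v -> gen G act M v) -> coinv_zero G act M.
Proof. by []. Qed.

Definition spb g (B : 'M['F_2]_(g + g)) : bool := B^T *m Jform g *m B == Jform g.
Definition cg g (B S : 'M['F_2]_(g + g)) := B *m S *m B^T.

Lemma transfer g (M : 'M['F_2]_(g + g) -> bool) S :
  gen (@spb g) (@cg g) (fun X => M (Jform g *m X)) S ->
  gen (@inSp g) (@conj_act g) M (Jform g *m S).
Proof.
move=> [s [hs ->]].
exists [seq (p.1.1, Jform g *m p.1.2 *m Jform g, Jform g *m p.2) | p <- s]; split.
  rewrite all_map; apply: sub_all hs => p /andP[/eqP hB hM] /=.
  by rewrite hM andbT; apply: spB_JBJ.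
rewrite big_map mulmx_sumr; apply: eq_big_seq => p ps /=; rewrite -scalemxAr.
have /andP[/eqP hB _] := allP hs p ps.
by rewrite mulmxBr conj_JBJ.
Qed.

Lemma JS_blocks g (S : 'M['F_2]_(g + g)) :
  Jform g *m S = block_mx (dlsubmx S) (drsubmx S) (ulsubmx S) (ursubmx S).
Proof.
rewrite -{1}[S]submxK JE mulmx_block !mul0mx !mul1mx !add0r !addr0.
by [].
Qed.

Lemma in_sp_JS g (S : 'M['F_2]_(g + g)) : in_sp (Jform g *m S) = (S^T == S).
Proof.
rewrite /in_sp JS_blocks block_mxKul block_mxKur block_mxKdl block_mxKdr /symmetricb.
apply/and3P/eqP.
  case=> /eqP h1 /eqP h2 /eqP h3; rewrite -[S]submxK tr_block_mx.
  by congr block_mx => //; rewrite h1 ?trmxK.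
move=> hS; rewrite trmx_dlsub trmx_drsub trmx_ulsub hS !eqxx; split => //.
Qed.

Lemma in_Y_JS g (S : 'M['F_2]_(g + g)) : in_Y (Jform g *m S) =
  [&& S^T == S, [forall i, S i i == 0] & \sum_(k < g) S (rshift g k) (lshift g k) == 0].
Proof.
rewrite /in_Y in_sp_JS JS_blocks block_mxKul block_mxKur block_mxKdl.
have hd : [forall i, S i i == 0] =
   (diag_zero (drsubmx S) && diag_zero (ulsubmx S)).
  apply/forallP/andP.
    by move=> h; split; apply/forallP => k; rewrite !mxE h.
  case => /forallP h1 /forallP h2 i; case: (split_ordP i) => k ->.
    by have := h2 k; rewrite !mxE.
  by have := h1 k; rewrite !mxE.
have ht : \tr (dlsubmx S) = \sum_(k < g) S (rshift g k) (lshift g k).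
  by apply: eq_bigr => k _; rewrite !mxE.
by rewrite hd ht; case: (S^T == S); case: (diag_zero _); case: (diag_zero _).
Qed.

Definition Sy n (x y : 'cV['F_2]_n) : 'M['F_2]_n := x *m y^T + y *m x^T.

Lemma SymC n (x y : 'cV['F_2]_n) : Sy x y = Sy y x.
Proof. by rewrite /Sy addrC. Qed.

Lemma SymDl n (x x' y : 'cV['F_2]_n) : Sy (x + x') y = Sy x y + Sy x' y.
Proof.
rewrite /Sy mulmxDl linearD /= mulmxDr.
by rewrite -!addrA; congr (_ + _); rewrite addrCA.
Qed.

Lemma SymDr n (x y y' : 'cV['F_2]_n) : Sy x (y + y') = Sy x y + Sy x y'.
Proof. by rewrite SymC SymDl !(SymC _ x). Qed.

Lemma Sym_tr n (x y : 'cV['F_2]_n) : (Sy x y)^T = Sy x y.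
Proof. by rewrite /Sy linearD /= !trmx_mul !trmxK addrC. Qed.

Lemma Sym_mul n (x y z : 'cV['F_2]_n) :
  Sy x y *m z = x *m (y^T *m z) + y *m (x^T *m z).
Proof. by rewrite /Sy mulmxDl !mulmxA. Qed.

Lemma outerD n (x y : 'cV['F_2]_n) :
  (x + y) *m (x + y)^T = x *m x^T + y *m y^T + Sy x y.
Proof.
rewrite linearD /= mulmxDl !mulmxDr /Sy.
by rewrite [y *m x^T + _]addrC addrACA.
Qed.

Lemma diff_tv g (w : 'cV['F_2]_(g + g)) (S : 'M['F_2]_(g + g)) : S^T = S ->
  cg (tv w) S - S = Sy (Jform g *m w) (S *m w)
     + Jform g *m w *m (w^T *m S *m w) *m (Jform g *m w)^T.
Proof.
move=> hS; rewrite /cg /tv /Sy.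
set v := Jform g *m w.
have hT : (1%:M + v *m w^T)^T = 1%:M + w *m v^T.
  by rewrite linearD /= trmx1 trmx_mul trmxK.
have hw : w^T *m S = (S *m w)^T by rewrite trmx_mul hS.
rewrite hT mulmxDl mul1mx !mulmxDr !mulmx1 mulmxDl.
rewrite addrC !addrA addNr add0r.
congr (_ + _ + _); first by rewrite -hw !mulmxA.
  by rewrite !mulmxA.
by rewrite !mulmxA.
Qed.

Definition MY g (X : 'M['F_2]_(g + g)) := in_Y (Jform g *m X).
Definition MS g (X : 'M['F_2]_(g + g)) := in_sp (Jform g *m X).
Definition gY g := gen (@spb g) (@cg g) (@MY g).
Definition gS g := gen (@spb g) (@cg g) (@MS g).

Lemma Sym_e_mul g (a b c : 'I_(g + g)) :
  Sy (e a) (e b) *m e c = (b == c)%:R *: e a + (a == c)%:R *: e b.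
Proof. by rewrite Sym_mul !eTe !mul_mx_scalar. Qed.

Lemma Sym_eE g (a b : 'I_(g + g)) : Sy (e a) (e b) = delta_mx a b + delta_mx b a.
Proof. by rewrite /Sy !eeT. Qed.

Lemma MY_Sym g (a b : 'I_(g + g)) : a != b -> b != pr a -> MY (Sy (e a) (e b)).
Proof.
move=> hab hb; rewrite /MY in_Y_JS Sym_tr eqxx /=; apply/andP; split.
  by apply/forallP => i; rewrite Sym_eE !mxE andbC F2_addxx.
rewrite big1 // => k _; rewrite Sym_eE !mxE.
have -> : (rshift g k == a) && (lshift g k == b) = false.
  apply/negbTE/negP => /andP[/eqP ha /eqP hb'].
  by move/eqP: hb; apply; rewrite -ha -hb' pr_r.
have -> : (rshift g k == b) && (lshift g k == a) = false.
  apply/negbTE/negP => /andP[/eqP ha /eqP hb'].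
  by move/eqP: hb; apply; rewrite -ha -hb' pr_l.
by rewrite addr0.
Qed.

Lemma MS_sym g (S : 'M['F_2]_(g + g)) : S^T = S -> MS S.
Proof. by move=> h; rewrite /MS in_sp_JS h eqxx. Qed.

Lemma MY_MS g (S : 'M['F_2]_(g + g)) : MY S -> MS S.
Proof. by rewrite /MY /MS in_Y_JS in_sp_JS => /and3P[]. Qed.

Lemma tv_spb g (w : 'cV['F_2]_(g + g)) : spb (tv w).
Proof. exact/eqP/tv_sp. Qed.

Lemma genY_nonpair g (a b : 'I_(g + g)) : a != b -> b != pr a ->
  gY (Sy (e a) (e b)).
Proof.
move=> hab hb.
have hm : MY (Sy (e (pr a)) (e b)) by apply: MY_Sym; rewrite ?prK // eq_sym.
have := @gen_diff _ _ _ (@spb g) (@cg g) (@MY g) _ _ (tv_spb (e (pr a))) hm.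
rewrite diff_tv ?Sym_tr // Je prK Sym_e_mul eqxx (negbTE hb) scale0r add0r scale1r.
rewrite -(mulmxA (e (pr a))^T) Sym_e_mul (negbTE hb) eqxx scale0r add0r scale1r eTe.
by rewrite eq_sym (negbTE hb) mul_mx_scalar scale0r mul0mx addr0.
Qed.

Ltac f2brute := repeat match goal with x : _ |- _ => case: (F2_cases x) => ->; clear x end.
Ltac mxF2 := let i := fresh "i" in let j := fresh "j" in
  apply/matrixP => i j; rewrite !mxE;
  repeat match goal with |- context [?M i j] =>
    let x := fresh "x" in generalize (M i j) as x; intro x end;
  f2brute; by apply/eqP.

Lemma ac_pair m n (P A C Q : 'M['F_2]_(m, n)) : A + C = (A + P) + (Q + C) + P + Q.
Proof. mxF2. Qed.

Lemma genY_pairs g (a c : 'I_(g + g)) : c != a -> c != pr a ->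
  gY (Sy (e a) (e (pr a)) + Sy (e c) (e (pr c))).
Proof.
move=> hca hcp.
have hm : MY (Sy (e a) (e c)) by apply: MY_Sym; rewrite // eq_sym.
have := @gen_diff _ _ _ (@spb g) (@cg g) (@MY g) _ _ (tv_spb (e a + e c)) hm.
rewrite diff_tv; last exact: Sym_tr.
have hJw : Jform g *m (e a + e c) = e (pr a) + e (pr c).
  by rewrite mulmxDr !Je.
have hac : (a == c) = false by rewrite eq_sym (negbTE hca).
have hSw : Sy (e a) (e c) *m (e a + e c) = e a + e c.
  rewrite mulmxDr !Sym_e_mul !eqxx (negbTE hca) hac /= !mulr0n !mulr1n !scale0r !scale1r add0r addr0.
  by rewrite addrC.
have hq : (e a + e c)^T *m Sy (e a) (e c) *m (e a + e c) = 0.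
  rewrite -mulmxA hSw [(e a + e c)^T]linearD /= mulmxDl !mulmxDr !eTe !eqxx (negbTE hca) hac.
  by apply/matrixP => i j; rewrite !ord1 !mxE eqxx; apply/eqP.
rewrite hJw hSw hq mulmx0 mul0mx addr0 SymDl !SymDr => hd.
rewrite (SymC (e a)) (SymC (e c)) (@ac_pair _ _ (Sy (e (pr a)) (e c)) _ _ (Sy (e (pr c)) (e a))) /gY.
have h1 : gY (Sy (e (pr a)) (e c)).
  by apply: genY_nonpair; [rewrite eq_sym | rewrite prK].
have h2 : gY (Sy (e (pr c)) (e a)).
  apply: genY_nonpair; last by rewrite prK eq_sym.
  by apply: contra hcp => /eqP <-; rewrite prK.
exact: (gnD (gnD hd h1) h2).
Qed.

Lemma eTe1 g (a : 'I_(g + g)) : (e a)^T *m e a = 1%:M.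
Proof. by rewrite eTe eqxx. Qed.
Lemma eTe0 g (a b : 'I_(g + g)) : a != b -> (e a)^T *m e b = 0.
Proof. by move=> h; rewrite eTe (negbTE h); apply/matrixP => i j; rewrite !mxE mul0rn. Qed.

Lemma MS_E g (k : 'I_(g + g)) : MS (e k *m (e k)^T).
Proof. by apply: MS_sym; rewrite trmx_mul trmxK. Qed.

Lemma genS_single g (i : 'I_(g + g)) :
  gS (Sy (e (pr i)) (e i) + e (pr i) *m (e (pr i))^T).
Proof.
have := @gen_diff _ _ _ (@spb g) (@cg g) (@MS g) _ _ (tv_spb (e i)) (MS_E i).
rewrite diff_tv; last by rewrite trmx_mul trmxK.
have hS : e i *m (e i)^T *m e i = e i by rewrite -mulmxA eTe1 mulmx1.
have hq : (e i)^T *m (e i *m (e i)^T) *m e i = 1%:M.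
  by rewrite !mulmxA eTe1 mul1mx eTe1.
by rewrite Je [X in Sy _ X]hS hq mulmx1.
Qed.

Lemma genS_double g (k l : 'I_(g + g)) : l != k -> l != pr k ->
  gS (Sy (e (pr k)) (e k) + Sy (e (pr l)) (e k) +
        (e (pr k) *m (e (pr k))^T + e (pr l) *m (e (pr l))^T + Sy (e (pr k)) (e (pr l)))).
Proof.
move=> hlk hlp.
have := @gen_diff _ _ _ (@spb g) (@cg g) (@MS g) _ _ (tv_spb (e k + e l)) (MS_E k).
rewrite diff_tv; last by rewrite trmx_mul trmxK.
have hkl : k != l by rewrite eq_sym.
have hS : e k *m (e k)^T *m (e k + e l) = e k.
  by rewrite -mulmxA mulmxDr eTe1 (eTe0 hkl) addr0 mulmx1.
have hq : (e k + e l)^T *m (e k *m (e k)^T) *m (e k + e l) = 1%:M.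
  by rewrite -mulmxA hS [(e k + e l)^T]linearD /= mulmxDl eTe1 (eTe0 hlk) addr0.
have hJ : Jform g *m (e k + e l) = e (pr k) + e (pr l) by rewrite mulmxDr !Je.
by rewrite hJ [X in Sy _ X]hS hq mulmx1 SymDl outerD.
Qed.


Lemma gY_gS g (v : 'M['F_2]_(g + g)) : gY v -> gS v.
Proof. by apply: gen_mono => m; apply: MY_MS. Qed.

Lemma ac_E_s (x y p a z : 'F_2) :
  a = (x + y + (p + a + z)) + (x + p) + y + z.
Proof. f2brute; by apply/eqP. Qed.

Lemma ac_E m n (X Y P A Z : 'M['F_2]_(m, n)) :
  A = (X + Y + (P + A + Z)) + (X + P) + Y + Z.
Proof. apply/matrixP => i j; rewrite !mxE; exact: ac_E_s. Qed.

Lemma ac_X m n (X A : 'M['F_2]_(m, n)) : X = (X + A) + A.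
Proof. by rewrite -addrA mx_addxx addr0. Qed.

Lemma gS_E g (a k : 'I_(g + g)) : k != a -> k != pr a -> gS (e a *m (e a)^T).
Proof.
move=> hka hkp.
have h1 : pr a != k by rewrite eq_sym.
have h2 : pr a != pr k by rewrite pr_eq eq_sym.
have hb := @genS_double g k (pr a) h1 h2.
rewrite prK in hb.
have ha := genS_single k.
have y1 : gS (Sy (e a) (e k)).
  by apply/gY_gS/genY_nonpair; rewrite // eq_sym.
have y2 : gS (Sy (e (pr k)) (e a)).
  apply/gY_gS/genY_nonpair; last by rewrite prK eq_sym.
  by apply: contra hkp => /eqP <-; rewrite prK.
rewrite (@ac_E _ _ (Sy (e (pr k)) (e k)) (Sy (e a) (e k)) (e (pr k) *m (e (pr k))^T) (e a *m (e a)^T)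
   (Sy (e (pr k)) (e a))).
exact: (gnD (gnD (gnD hb ha) y1) y2).
Qed.

Lemma gS_pair g (a : 'I_(g + g)) : gS (e a *m (e a)^T) -> gS (Sy (e a) (e (pr a))).
Proof.
move=> hE; have := genS_single (pr a); rewrite prK => hs.
rewrite (@ac_X _ _ (Sy (e a) (e (pr a))) (e a *m (e a)^T)).
exact: (gnD hs hE).
Qed.

Lemma gen_sum1 (F : pzRingType) (GT : Type) (V : lmodType F)
  (G : GT -> bool) (act : GT -> V -> V) (M : V -> bool) (I : finType) (X : I -> V) :
  (forall i, gen G act M (X i)) -> gen G act M (\sum_i X i).
Proof.
move=> h; apply: (big_ind (gen G act M)); [exact: gn0 | exact: gnD | by move=> i _].
Qed.

Lemma sum_delta n (f : 'I_n -> 'I_n -> 'F_2) :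
  \sum_a \sum_b f a b *: delta_mx a b = \matrix_(i, j) f i j.
Proof.
rewrite [RHS]matrix_sum_delta; apply: eq_bigr => a _; apply: eq_bigr => b _.
by rewrite mxE.
Qed.

Lemma sum_deltaT n (f : 'I_n -> 'I_n -> 'F_2) :
  \sum_a \sum_b f a b *: delta_mx b a = (\matrix_(i, j) f i j)^T.
Proof.
rewrite -sum_delta linear_sum; apply: eq_bigr => a _.
rewrite linear_sum; apply: eq_bigr => b _.
by rewrite linearZ /= trmx_delta.
Qed.

Definition Cf n (S : 'M['F_2]_n) (a b : 'I_n) : 'F_2 := (a < b)%N%:R * S a b.
Definition Df n (S : 'M['F_2]_n) (a b : 'I_n) : 'F_2 := (a == b)%:R * S a b.

Lemma decomp g (S : 'M['F_2]_(g + g)) : S^T = S ->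
  S = \sum_a \sum_b Cf S a b *: Sy (e a) (e b) + \sum_a \sum_b Df S a b *: delta_mx a b.
Proof.
move=> hS.
have -> : \sum_a \sum_b Cf S a b *: Sy (e a) (e b) =
    \sum_a \sum_b Cf S a b *: delta_mx a b + \sum_a \sum_b Cf S a b *: delta_mx b a.
  rewrite -big_split; apply: eq_bigr => a _; rewrite -big_split; apply: eq_bigr => b _.
  by rewrite Sym_eE scalerDr.
rewrite sum_deltaT !sum_delta; apply/matrixP => i j; rewrite !mxE /Cf /Df.
have hji : S j i = S i j by rewrite -[in LHS]hS mxE.
case: (ltngtP i j) => [hij|hij|hij].
- have e1 : (i == j) = false by apply/eqP => h; move: hij; rewrite h ltnn.
  by rewrite e1; move: (S i j) (S j i) => x y; f2brute; apply/eqP.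
- have e1 : (i == j) = false by apply/eqP => h; move: hij; rewrite h ltnn.
  by rewrite e1 hji; move: (S i j) => x; f2brute; apply/eqP.
- by rewrite (val_inj hij) eqxx; move: (S j j) => x; f2brute; apply/eqP.
Qed.

Lemma Sy_xx n (x : 'cV['F_2]_n) : Sy x x = 0.
Proof. exact: mx_addxx. Qed.

Lemma X_in_gY g (l0 a b : 'I_(g + g)) :
  gY (Sy (e a) (e b) + (b == pr a)%:R *: Sy (e l0) (e (pr l0))).
Proof.
have [->|hb] := eqVneq b (pr a).
  rewrite scale1r.
  have [<-|h1] := eqVneq l0 a; first by rewrite mx_addxx; exact: gn0.
  have [h2|h2] := eqVneq l0 (pr a).
    by rewrite h2 prK SymC mx_addxx; exact: gn0.
  exact: genY_pairs.
rewrite scale0r addr0.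
have [<-|hab] := eqVneq a b; first by rewrite Sy_xx; exact: gn0.
exact: genY_nonpair.
Qed.

Lemma sum_pairs g (S : 'M['F_2]_(g + g)) :
  \sum_a \sum_b Cf S a b * (b == pr a)%:R = \sum_(k < g) S (lshift g k) (rshift g k).
Proof.
under eq_bigr => a _.
  rewrite (bigD1 (pr a)) //= eqxx mulr1 big1 ?addr0; last first.
    by move=> b hb; rewrite (negbTE hb) mulr0.
  over.
rewrite big_split_ord /=.
rewrite [X in _ + X]big1 ?addr0; last first.
  move=> k _; rewrite /Cf pr_r /=.
  by rewrite ltnNge (leq_trans (ltnW (ltn_ord k)) (leq_addr _ _)) mul0r.
apply: eq_bigr => k _; rewrite /Cf pr_l /=.
by rewrite (leq_trans (ltn_ord k) (leq_addr _ _)) mul1r.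
Qed.

Lemma gY_all g (S : 'M['F_2]_(g + g)) : (0 < g)%N -> MY S -> gY S.
Proof.
move=> hg; set l0 := lshift g (Ordinal hg).
rewrite /MY in_Y_JS => /and3P[/eqP hS /forallP hd /eqP ht].
rewrite (decomp hS); apply: gnD.
  set P0 := Sy (e l0) (e (pr l0)).
  have -> : \sum_a \sum_b Cf S a b *: Sy (e a) (e b) =
      \sum_a \sum_b Cf S a b *: (Sy (e a) (e b) + (b == pr a)%:R *: P0).
    symmetry.
    under eq_bigr => a _.
      under eq_bigr => b _ do rewrite scalerDr scalerA.
      rewrite big_split /= -scaler_suml.
      over.
    rewrite big_split /= -scaler_suml sum_pairs.
    have -> : \sum_(k < g) S (lshift g k) (rshift g k) = 0.
      by rewrite -[RHS]ht; apply: eq_bigr => k _; rewrite -[in LHS]hS mxE.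
    by rewrite scale0r addr0.
  apply: gen_sum1 => a; apply: gen_sum => b _; exact: X_in_gY.
apply: gen_sum1 => a; apply: gen_sum => b.
rewrite /Df; have [<-|hab] := eqVneq a b.
  by rewrite (eqP (hd a)) mulr0 eqxx.
by rewrite mul0r eqxx.
Qed.

Lemma exists_k g (a : 'I_(g + g)) : (1 < g)%N -> exists k, (k != a) && (k != pr a).
Proof.
move=> hg; have hg0 : (0 < g)%N by apply: ltn_trans hg.
set l0 := lshift g (Ordinal hg0); set l1 := lshift g (Ordinal hg).
have h01 : l1 != l0 by rewrite /l0 /l1 eq_shift.
have h01' : l1 != pr l0 by rewrite /l0 /l1 pr_l eq_shift.
have [h1|h1] := eqVneq l0 a.
  by exists l1; rewrite -h1 h01 h01'.
have [h2|h2] := eqVneq l0 (pr a).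
  by exists l1; rewrite -h2 -{1}(prK a) -h2 h01 h01'.
by exists l0; rewrite h1 h2.
Qed.

Lemma gS_E_all g (a : 'I_(g + g)) : (1 < g)%N -> gS (e a *m (e a)^T).
Proof.
by move=> hg; have [k /andP[h1 h2]] := exists_k a hg; apply: (gS_E h1 h2).
Qed.

Lemma gS_all g (S : 'M['F_2]_(g + g)) : (1 < g)%N -> MS S -> gS S.
Proof.
move=> hg; rewrite /MS in_sp_JS => /eqP hS.
rewrite (decomp hS); apply: gnD.
  apply: gen_sum1 => a; apply: gen_sum => b _.
  have [<-|hab] := eqVneq a b; first by rewrite Sy_xx; exact: gn0.
  have [->|hb] := eqVneq b (pr a); first exact/gS_pair/gS_E_all.
  exact/gY_gS/genY_nonpair.
apply: gen_sum1 => a; apply: gen_sum => b.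
rewrite /Df; have [<-|hab] := eqVneq a b; last by rewrite mul0r eqxx.
by move=> _; rewrite -eeT; apply: gS_E_all.
Qed.

Lemma U_gen g (v : 'cV['F_2]_(g + g)) :
  gen (@inSp g) (@nat_act g) (fun _ => true) v.
Proof.
rewrite [v]matrix_sum_delta; apply: gen_sum1 => a; apply: gen_sum => j _.
rewrite (ord1 j) -/(e a).
have := @gen_diff _ _ _ (@inSp g) (@nat_act g) (fun _ => true) _ (e (pr a))
   (tv_spb (e (pr a))) isT.
rewrite /nat_act /tv mulmxDl mul1mx -mulmxA eTe1 mulmx1 Je prK.
by rewrite addrC addKr.
Qed.

Lemma JJv g (v : 'M['F_2]_(g + g)) : Jform g *m (Jform g *m v) = v.
Proof. by rewrite mulmxA JJ mul1mx. Qed.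

Lemma Y_gen g (v : 'M['F_2]_(g + g)) : (0 < g)%N -> in_Y v ->
  gen (@inSp g) (@conj_act g) (@in_Y g) v.
Proof.
move=> hg hv; rewrite -(JJv v); apply: transfer; apply: gY_all => //.
by rewrite /MY JJv.
Qed.

Lemma sp_gen g (v : 'M['F_2]_(g + g)) : (1 < g)%N -> in_sp v ->
  gen (@inSp g) (@conj_act g) (@in_sp g) v.
Proof.
move=> hg hv; rewrite -(JJv v); apply: transfer; apply: gS_all => //.
by rewrite /MS JJv.
Qed.

Lemma in_Y0 g : in_Y (0 : 'M['F_2]_(g + g)).
Proof.
rewrite -(mulmx0 _ (Jform g)) in_Y_JS trmx0 eqxx /=.
by apply/andP; split; [apply/forallP => i; rewrite mxE | rewrite big1 // => k _; rewrite mxE].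
Qed.

Theorem lemma5p5 :
  (forall g : nat, (1 <= g)%N ->
     coinv_zero (@inSp g) (@conj_act g) (@in_Y g) /\
     coinv_zero (@inSp g) (@nat_act g) (fun _ => true)) /\
  (forall g : nat, (2 <= g)%N ->
     coinv_quot_zero (@inSp g) (@conj_act g) (@in_sp g) (@in_Y g) /\
     coinv_zero (@inSp g) (@conj_act g) (@in_sp g)).
Proof.
split=> g hg; split.
- by move=> v hv; apply: Y_gen.
- by move=> v _; apply: U_gen.
- move=> v hv; have [s [hs hv']] := sp_gen hg hv; exists s; split => //.
  by rewrite -hv' subrr in_Y0.
- by move=> v hv; apply: sp_gen.
Qed.
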